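(* Let $\mathbb{L}^2$ be as described in the context. Every non-constant geodesic of $\mathbb{L}^2$ has, modulo reparametrization, one of the following forms, for some $\alpha,\beta\in\mathbb{R}$, $c>0$ and choice of sign $\pm$: (1) $\sigma(t)=(e^t,\alpha)$ for $-\infty<t<\infty$; this geodesic is complete. (2) $\sigma(t)=(t^{-1},\pm t^{-1}+\alpha)$ for $0<t<\infty$; this geodesic is incomplete at one end and complete at the other end. (3) $\sigma(t)=\left(\frac{1}{c\sinh(t)},\pm\frac{\coth(t)}{c}+\beta\right)$ for $t\in(0,\infty)$. This tends asymptotically to the line $x^1=0$ as $t\to\infty$ and escapes to the right ($x^1\to\infty$) as $t\to0$. These geodesics are incomplete at one end and complete at the other; they all have infinite (and negative) length. (4) $\sigma(t)=\left(\frac{1}{c\sin(t)},\pm\frac{\cot(t)}{c}+\beta\right)$ for $t\in(0,\pi)$. These escape upwards and to the right as $t\to0$ and downwards and to the right as $t\to\pi$; such a geodesic is incomplete at both ends and has total length $\pi$. (5) The geodesics in (3) and (4) solve an equation of the form $(x^1)^2-\frac{\lambda}{c^2}=(x^2+\beta)^2$ (for suitable $\beta\in\mathbb{R}$) and are hyperbolas; here $\lambda=+1$ for the ''vertical'' geodesics of (4), $\lambda=-1$ for the ''horizontal'' geodesics of (3), while $\lambda=0$ corresponds to the null geodesics.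
   Context: $\mathbb{L}^2$ is $\mathbb{R}^+\times\mathbb{R}=\{(x^1,x^2):x^1>0\}$ with the torsion free connection whose nonzero Christoffel symbols (with $\nabla_{\partial_{x^i}}\partial_{x^j}=\Gamma_{ij}{}^k\partial_{x^k}$) are $\Gamma_{11}{}^1=-\frac1{x^1}$, $\Gamma_{12}{}^2=\Gamma_{21}{}^2=-\frac1{x^1}$, $\Gamma_{22}{}^1=-\frac1{x^1}$. This is the Levi--Civita connection of the Lorentzian metric $g=(x^1)^{-2}\operatorname{diag}(-1,1)$ (its symmetric Ricci tensor), and lengths are measured with respect to $g$. A geodesic is complete at an end if it is defined for all parameter values in that direction. *)

(* Defs.v *)
From Stdlib Require Import Reals.
From Coquelicot Require Import Coquelicot.
Open Scope R_scope.

Inductive idx := i1 | i2.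

(* Christoffel symbols Gamma_{ij}^k at a point with first coordinate x1
   (they do not depend on x2). *)
Definition Gamma (i j k : idx) (x1 : R) : R :=
  match i, j, k with
  | i1, i1, i1 => - / x1
  | i1, i2, i2 => - / x1
  | i2, i1, i2 => - / x1
  | i2, i2, i1 => - / x1
  | _, _, _ => 0
  end.

Definition coord (x1 x2 : R -> R) (i : idx) : R -> R :=
  match i with i1 => x1 | i2 => x2 end.

Definition in_dom (a b : Rbar) (t : R) : Prop := Rbar_lt a t /\ Rbar_lt t b.

Definition geodesic (a b : Rbar) (x1 x2 : R -> R) : Prop :=
  forall t, in_dom a b t ->
    0 < x1 t /\
    (forall i, ex_derive (coord x1 x2 i) t /\
               ex_derive (Derive (coord x1 x2 i)) t) /\
    (forall k,
       Derive (Derive (coord x1 x2 k)) t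
       + (Gamma i1 i1 k (x1 t) * Derive x1 t * Derive x1 t
        + Gamma i1 i2 k (x1 t) * Derive x1 t * Derive x2 t
        + Gamma i2 i1 k (x1 t) * Derive x2 t * Derive x1 t
        + Gamma i2 i2 k (x1 t) * Derive x2 t * Derive x2 t) = 0).

Definition nonconstant (a b : Rbar) (x1 x2 : R -> R) : Prop :=
  exists s t, in_dom a b s /\ in_dom a b t /\ (x1 s, x2 s) <> (x1 t, x2 t).

Definition reparam_of (a b : Rbar) (x1 x2 : R -> R)
                      (A B : Rbar) (y1 y2 : R -> R) : Prop :=
  exists p q : R, p <> 0 /\
    forall s, in_dom a b s ->
      in_dom A B (p * s + q) /\ x1 s = y1 (p * s + q) /\ x2 s = y2 (p * s + q).

Definition complete_right (a b : Rbar) (x1 x2 : R -> R) : Prop :=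
  exists y1 y2, geodesic a p_infty y1 y2 /\
    forall t, in_dom a b t -> y1 t = x1 t /\ y2 t = x2 t.
Definition complete_left (a b : Rbar) (x1 x2 : R -> R) : Prop :=
  exists y1 y2, geodesic m_infty b y1 y2 /\
    forall t, in_dom a b t -> y1 t = x1 t /\ y2 t = x2 t.

Definition sig1_1 (t : R) : R := exp t.
Definition sig1_2 (al : R) (t : R) : R := al.
Definition sig2_1 (t : R) : R := / t.
Definition sig2_2 (e al : R) (t : R) : R := e * / t + al.
Definition sig3_1 (c : R) (t : R) : R := / (c * sinh t).
Definition sig3_2 (c e be : R) (t : R) : R := e * (cosh t / sinh t) / c + be.
Definition sig4_1 (c : R) (t : R) : R := / (c * sin t).
Definition sig4_2 (c e be : R) (t : R) : R := e * (cos t / sin t) / c + be.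

Definition Rbar_at_left (b : Rbar) : (R -> Prop) -> Prop :=
  match b with Finite r => at_left r | _ => Rbar_locally b end.
Definition Rbar_at_right (a : Rbar) : (R -> Prop) -> Prop :=
  match a with Finite r => at_right r | _ => Rbar_locally a end.

(* g(sigma', sigma') for g = (x1)^-2 diag(-1,1). *)
Definition gnorm (x1 x2 : R -> R) (t : R) : R :=
  (- (Derive x1 t) ^ 2 + (Derive x2 t) ^ 2) / (x1 t) ^ 2.
Definition sgn (r : R) : R :=
  if Rlt_dec 0 r then 1 else if Rlt_dec r 0 then -1 else 0.
Definition len_density (x1 x2 : R -> R) (t : R) : R :=
  sgn (gnorm x1 x2 t) * sqrt (Rabs (gnorm x1 x2 t)).

Definition total_length (a b : Rbar) (x1 x2 : R -> R) (L : Rbar) : Prop :=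
  exists t0, in_dom a b t0 /\ exists L1 L2 : Rbar,
    filterlim (fun u => RInt (len_density x1 x2) u t0) (Rbar_at_right a)
              (Rbar_locally L1) /\
    filterlim (fun v => RInt (len_density x1 x2) t0 v) (Rbar_at_left b)
              (Rbar_locally L2) /\
    is_Rbar_plus L1 L2 L.

(* Main.v *)
Require Import Defs.
From Stdlib Require Import Reals Lra.
From Coquelicot Require Import Coquelicot.
Open Scope R_scope.


Lemma in_dom_between a b s u x : in_dom a b s -> in_dom a b u -> s <= x <= u -> in_dom a b x.
Proof.
  unfold in_dom; intros [H1 H2] [H3 H4] [H5 H6]; split.
  - eapply Rbar_lt_le_trans; [exact H1| simpl; lra].
  - apply Rbar_le_lt_trans with (Finite u); [simpl; exact H6| exact H4].
Qed.

Lemma in_dom_locally a b t : in_dom a b t -> locally t (in_dom a b).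
Proof.
  intros [Ha Hb].
  assert (HA : exists d1 : posreal, forall y, Rabs (y - t) < d1 -> Rbar_lt a y).
  { destruct a as [a| |]; simpl in Ha.
    - assert (0 < t - a) by lra. exists (mkposreal _ H). simpl; intros y Hy.
      apply Rabs_lt_between in Hy. simpl; lra.
    - contradiction.
    - exists (mkposreal 1 Rlt_0_1); intros; simpl; auto. }
  assert (HB : exists d1 : posreal, forall y, Rabs (y - t) < d1 -> Rbar_lt y b).
  { destruct b as [b| |]; simpl in Hb.
    - assert (0 < b - t) by lra. exists (mkposreal _ H). simpl; intros y Hy.
      apply Rabs_lt_between in Hy. simpl; lra.
    - exists (mkposreal 1 Rlt_0_1); intros; simpl; auto.
    - contradiction. }
  destruct HA as [d1 H1], HB as [d2 H2].
  assert (0 < Rmin d1 d2) by (apply Rmin_pos; apply cond_pos).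
  exists (mkposreal _ H). intros y Hy. unfold ball in Hy; simpl in Hy.
  unfold AbsRing_ball, abs, minus, plus, opp in Hy; simpl in Hy.
  split; [apply H1|apply H2]; eapply Rlt_le_trans; try apply Hy;
  [apply Rmin_l|apply Rmin_r].
Qed.

Lemma const_on a b (f : R -> R) : (forall t, in_dom a b t -> is_derive f t 0) ->
  forall s u, in_dom a b s -> in_dom a b u -> f s = f u.
Proof.
  intros Hd s u Hs Hu.
  assert (Hb : forall x, Rmin s u <= x <= Rmax s u -> in_dom a b x).
  { intros x Hx. destruct (Rle_dec s u).
    - rewrite Rmin_left, Rmax_right in Hx by lra. eapply in_dom_between; [exact Hs|exact Hu|lra].
    - rewrite Rmin_right, Rmax_left in Hx by lra. eapply in_dom_between; [exact Hu|exact Hs|lra]. }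
  destruct (MVT_gen f s u (fun _ => 0)) as [c [_ Hc]].
  - intros x Hx. apply Hd, Hb; lra.
  - intros x Hx. apply continuity_pt_filterlim. apply (ex_derive_continuous (K:=R_AbsRing) (V:=R_NormedModule)).
    eexists; apply Hd, Hb; exact Hx.
  - lra.
Qed.


Ltac fixD := repeat match goal with |- context [Derive (fun x => ?f x) ?t] =>
   change (Derive (fun x => f x) t) with (Derive f t) end.

Ltac ad := auto_derive; [repeat split; try (eexists; eassumption); auto | fixD].

Lemma uniq2 a b E (d dp : R -> R) t0 :
  (forall t, in_dom a b t -> is_derive d t (dp t) /\ is_derive dp t (-E * d t)) ->
  in_dom a b t0 -> d t0 = 0 -> dp t0 = 0 -> forall t, in_dom a b t -> d t = 0.
Proof.
  intros Hd H0 Hd0 Hp0 t Ht.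
  destruct (Rlt_dec 0 E) as [HE|HE].
  - assert (C := const_on a b (fun t => dp t ^ 2 + E * d t ^ 2)).
    assert (Ht' := C ltac:(intros s Hs; destruct (Hd s Hs) as [A B];
      ad; rewrite (is_derive_unique _ _ _ A), (is_derive_unique _ _ _ B); ring) t t0 Ht H0).
    simpl in Ht'. rewrite Hd0, Hp0 in Ht'.
    assert (H1: d t * d t = 0) by nra. destruct (Rmult_integral _ _ H1); auto.
  - set (m := sqrt (- E)).
    assert (Hm : m * m = - E) by (apply sqrt_sqrt; lra).
    assert (C := const_on a b (fun t => (dp t + m * d t) * exp (- m * t))).
    assert (G := fun s Hs => C ltac:(intros u Hu; destruct (Hd u Hu) as [A B];
      ad; rewrite (is_derive_unique _ _ _ A), (is_derive_unique _ _ _ B); nra) s t0 Hs H0).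
    simpl in G. rewrite Hd0, Hp0 in G.
    assert (G' : forall s, in_dom a b s -> dp s = - m * d s).
    { intros s Hs. specialize (G s Hs). assert (exp (- m * s) > 0) by apply exp_pos.
      assert (G2: (dp s + m * d s) * exp (-m*s) = 0) by (rewrite G; ring). destruct (Rmult_integral _ _ G2); lra. }
    assert (C2 := const_on a b (fun t => d t * exp (m * t))).
    assert (H := C2 ltac:(intros u Hu; destruct (Hd u Hu) as [A B];
      ad; rewrite (is_derive_unique _ _ _ A), G' by exact Hu; ring) t t0 Ht H0).
    simpl in H. rewrite Hd0 in H. assert (exp (m * t) > 0) by apply exp_pos.
    assert (G2: d t * exp (m*t) = 0) by (rewrite H; ring). destruct (Rmult_integral _ _ G2); auto; lra.
Qed.


Lemma geo_explicit a b x1 x2 d1 d2 dd1 dd2 :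
 (forall t, in_dom a b t -> 0 < x1 t /\ is_derive x1 t (d1 t) /\ is_derive x2 t (d2 t) /\
    is_derive d1 t (dd1 t) /\ is_derive d2 t (dd2 t) /\
    dd1 t - (d1 t ^ 2 + d2 t ^ 2) / x1 t = 0 /\ dd2 t - 2 * d1 t * d2 t / x1 t = 0) ->
 geodesic a b x1 x2.
Proof.
  intros H t Ht.
  destruct (H t Ht) as (P & A1 & A2 & B1 & B2 & E1 & E2).
  assert (L1 : locally t (fun y => d1 y = Derive x1 y)).
  { eapply filter_imp; [|apply (in_dom_locally a b t Ht)].
    intros y Hy; destruct (H y Hy) as (_ & C & _); symmetry; apply is_derive_unique; exact C. }
  assert (L2 : locally t (fun y => d2 y = Derive x2 y)).
  { eapply filter_imp; [|apply (in_dom_locally a b t Ht)].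
    intros y Hy; destruct (H y Hy) as (_ & _ & C & _); symmetry; apply is_derive_unique; exact C. }
  assert (C1 := is_derive_ext_loc _ _ _ _ L1 B1).
  assert (C2 := is_derive_ext_loc _ _ _ _ L2 B2).
  split; [exact P|split].
  - intros [|]; simpl; split; eexists; eassumption.
  - assert (D1 := is_derive_unique _ _ _ A1). assert (D2 := is_derive_unique _ _ _ A2).
    assert (DD1 := is_derive_unique _ _ _ C1). assert (DD2 := is_derive_unique _ _ _ C2).
    intros [|]; simpl; rewrite ?DD1, ?DD2, ?D1, ?D2.
    + transitivity (dd1 t - (d1 t ^ 2 + d2 t ^ 2) / x1 t); [field; lra | exact E1].
    + transitivity (dd2 t - 2 * d1 t * d2 t / x1 t); [field; lra | exact E2].
Qed.

Ltac nz := repeat match goal with |- _ * _ <> 0 => apply Rmult_integral_contrapositive_currified | |- / _ <> 0 => apply Rinv_neq_0_compat end; lra.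

Lemma sinh_pos t : 0 < t -> 0 < sinh t.
Proof. intros; unfold sinh. assert (exp (-t) < exp t) by (apply exp_increasing; lra). lra. Qed.

Lemma geo1 al : geodesic m_infty p_infty sig1_1 (sig1_2 al).
Proof.
  apply geo_explicit with exp (fun _ => 0) exp (fun _ => 0).
  intros t _; unfold sig1_1, sig1_2. assert (exp t > 0) by apply exp_pos.
  repeat match goal with |- _ /\ _ => split end; auto.
  - apply is_derive_exp.
  - apply (is_derive_const (K:=R_AbsRing) (V:=R_NormedModule)).
  - apply is_derive_exp.
  - apply (is_derive_const (K:=R_AbsRing) (V:=R_NormedModule)).
  - field; lra.
  - field; lra.
Qed.

Lemma geo2 al e : (e = 1 \/ e = -1) -> geodesic 0 p_infty sig2_1 (sig2_2 e al).
Proof.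
  intros He.
  apply geo_explicit with (fun t => - / t ^ 2) (fun t => - e / t ^ 2)
    (fun t => 2 / t ^ 3) (fun t => 2 * e / t ^ 3).
  intros t [Ht _]; simpl in Ht; unfold sig2_1, sig2_2.
  repeat match goal with |- _ /\ _ => split end.
  - apply Rinv_0_lt_compat; lra.
  - auto_derive; [repeat split; intro; nra| field; lra].
  - auto_derive; [repeat split; intro; nra| field; lra].
  - auto_derive; [repeat split; intro; nra| field; lra].
  - auto_derive; [repeat split; intro; nra| field; lra].
  - destruct He; subst; field; lra.
  - field; lra.
Qed.

Lemma geo3 c be e : 0 < c -> (e = 1 \/ e = -1) -> geodesic 0 p_infty (sig3_1 c) (sig3_2 c e be).
Proof.
  intros Hc He.
  apply geo_explicit with (fun t => - cosh t / (c * sinh t ^ 2)) (fun t => - e / (c * sinh t ^ 2))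
    (fun t => (cosh t ^ 2 + 1) / (c * sinh t ^ 3)) (fun t => 2 * e * cosh t / (c * sinh t ^ 3)).
  intros t [Ht _]; simpl in Ht; unfold sig3_1, sig3_2.
  assert (Hs := sinh_pos t Ht).
  assert (HE : exp t > 0) by apply exp_pos.
  assert (Hs' : exp t - / exp t <> 0) by (unfold sinh in Hs; rewrite exp_Ropp in Hs; lra).
  assert (Hs'' : exp t * exp t - 1 <> 0).
  { intro Z; apply Hs'. replace (exp t - / exp t) with ((exp t * exp t - 1) / exp t) by (field; lra).
    rewrite Z; field; lra. }
  unfold sinh, cosh in *.
  repeat match goal with |- _ /\ _ => split end.
  - apply Rinv_0_lt_compat; nra.
  all: try (auto_derive; [repeat split; nz | rewrite !exp_Ropp; set (X := exp t) in *; field; repeat split; lra]).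
  - rewrite !exp_Ropp. set (X := exp t) in *. destruct He; subst; field; repeat split; lra.
  - rewrite !exp_Ropp. set (X := exp t) in *. field; repeat split; lra.
Qed.

Lemma geo4 c be e : 0 < c -> (e = 1 \/ e = -1) -> geodesic 0 PI (sig4_1 c) (sig4_2 c e be).
Proof.
  intros Hc He.
  apply geo_explicit with (fun t => - cos t / (c * sin t ^ 2)) (fun t => - e / (c * sin t ^ 2))
    (fun t => (sin t ^ 2 + 2 * cos t ^ 2) / (c * sin t ^ 3)) (fun t => 2 * e * cos t / (c * sin t ^ 3)).
  intros t [Ht1 Ht2]; simpl in Ht1, Ht2; unfold sig4_1, sig4_2.
  assert (Hs : 0 < sin t) by (apply sin_gt_0; lra).
  assert (H2 : sin t ^ 2 + cos t ^ 2 = 1) by (rewrite <- (sin2_cos2 t); unfold Rsqr; ring).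
  repeat match goal with |- _ /\ _ => split end.
  - apply Rinv_0_lt_compat; nra.
  - auto_derive; [repeat split; nz | field; repeat split; lra].
  - auto_derive; [repeat split; nz | ].
    transitivity (- e * (sin t ^ 2 + cos t ^ 2) / (c * sin t ^ 2)); [field; repeat split; lra|].
    rewrite H2; field; repeat split; lra.
  - auto_derive; [repeat split; nz | field; repeat split; lra].
  - auto_derive; [repeat split; nz | field; repeat split; lra].
  - transitivity ((sin t ^ 2 + cos t ^ 2 - 1) / (c * sin t ^ 3)).
    + destruct He; subst; field; repeat split; lra.
    + rewrite H2; field; repeat split; lra.
  - field; repeat split; lra.
Qed.


Lemma cont_R (f : R -> R) x : ex_derive f x -> filterlim f (locally x) (locally (f x)).
Proof. intros H; apply (ex_derive_continuous (K:=R_AbsRing) (V:=R_NormedModule)); exact H. Qed.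

Lemma loc_gt (f : R -> R) x r : ex_derive f x -> r < f x -> locally x (fun t => r < f t).
Proof.
  intros H Hr. assert (C := cont_R f x H).
  assert (He : 0 < f x - r) by lra.
  assert (L := C (ball (f x) (mkposreal _ He)) (locally_ball _ _)).
  eapply filter_imp; [|exact L]. intros t Ht. unfold ball in Ht; simpl in Ht.
  unfold AbsRing_ball, abs, minus, plus, opp in Ht; simpl in Ht.
  apply Rabs_lt_between in Ht. lra.
Qed.

Lemma loc_within x (D : R -> Prop) (P : R -> Prop) : locally x P -> within D (locally x) P.
Proof. intros H. unfold within. eapply filter_imp; [|exact H]. auto. Qed.

Lemma lim_to_right0 (F : (R -> Prop) -> Prop) {FF : Filter F} (g : R -> R) :
  filterlim g F (locally 0) -> F (fun t => 0 < g t) -> filterlim g F (at_right 0).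
Proof.
  intros H1 H2 P [eps HP]. unfold filtermap.
  assert (B := H1 (ball 0 eps) (locally_ball _ _)). unfold filtermap in B.
  generalize (filter_and _ _ B H2). apply filter_imp. intros t [A C]. apply HP; auto.
Qed.

Lemma lim_inv_pinf (F : (R -> Prop) -> Prop) {FF : Filter F} (g : R -> R) :
  filterlim g F (at_right 0) -> filterlim (fun t => / g t) F (Rbar_locally p_infty).
Proof. intros H. eapply filterlim_comp; [exact H| exact filterlim_Rinv_0_right]. Qed.

Lemma lim_combo (F : (R -> Prop) -> Prop) {FF : Filter F} (u v : R -> R) k be :
  filterlim u F (Rbar_locally p_infty) -> F (fun t => 1/2 < v t) -> 
  (0 < k -> filterlim (fun t => k * (v t * u t) + be) F (Rbar_locally p_infty)) /\
  (k < 0 -> filterlim (fun t => k * (v t * u t) + be) F (Rbar_locally m_infty)).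
Proof.
  intros Hu Hv. split; intros Hk P [M HP]; unfold filtermap.
  - assert (A := Hu (fun x => Rmax 0 (2 * (M - be) / k) < x) ltac:(exists (Rmax 0 (2 * (M - be) / k)); auto)). unfold filtermap in A.
    generalize (filter_and _ _ A Hv). apply filter_imp. intros t [A1 A2]. apply HP.
    assert (Q1 := Rmax_l 0 (2 * (M - be) / k)). assert (Q2 := Rmax_r 0 (2 * (M - be) / k)).
    assert (k * (2 * (M - be) / k) = 2 * (M - be)) by (field; lra).
    assert (0 < u t) by lra.
    assert (k * u t > k * (2 * (M - be) / k)) by (apply Rmult_lt_compat_l; lra).
    assert (k * u t * (v t - 1/2) > 0) by (apply Rmult_lt_0_compat; [apply Rmult_lt_0_compat|]; lra). nra.
  - assert (A := Hu (fun x => Rmax 0 (2 * (M - be) / k) < x) ltac:(exists (Rmax 0 (2 * (M - be) / k)); auto)). unfold filtermap in A.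
    generalize (filter_and _ _ A Hv). apply filter_imp. intros t [A1 A2]. apply HP.
    assert (Q1 := Rmax_l 0 (2 * (M - be) / k)). assert (Q2 := Rmax_r 0 (2 * (M - be) / k)).
    assert (k * (2 * (M - be) / k) = 2 * (M - be)) by (field; lra).
    assert (0 < u t) by lra.
    assert (k * u t < k * (2 * (M - be) / k)) by (assert (-k * u t > -k * (2 * (M - be) / k)) by (apply Rmult_lt_compat_l; lra); lra).
    assert ((-k) * u t * (v t - 1/2) > 0) by (apply Rmult_lt_0_compat; [apply Rmult_lt_0_compat|]; lra). nra.
Qed.

Lemma blowup (G : (R -> Prop) -> Prop) {FF : ProperFilter G} (y f : R -> R) x :
  filter_le G (locally x) -> filterlim y (locally x) (locally (y x)) ->
  filterlim f G (Rbar_locally p_infty) -> G (fun t => y t = f t) -> False.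
Proof.
  intros Hle Hy Hf Hag.
  assert (A := Hle _ (Hy (ball (y x) (mkposreal 1 Rlt_0_1)) (locally_ball _ _))).
  assert (B := Hf (fun z => y x + 1 < z) ltac:(exists (y x + 1); auto)). unfold filtermap in B.
  destruct (filter_ex _ (filter_and _ _ A (filter_and _ _ B Hag))) as [t [H1 [H2 H3]]].
  unfold ball in H1; simpl in H1.
  unfold AbsRing_ball, abs, minus, plus, opp in H1; simpl in H1.
  apply Rabs_lt_between in H1. rewrite H3 in H1. lra.
Qed.


Lemma at_right_forall x (P : R -> Prop) : (forall t, x < t -> P t) -> at_right x P.
Proof. intros H. unfold at_right, within. apply filter_forall. auto. Qed.

Lemma lim_cont_within (g : R -> R) x (D : R -> Prop) l : ex_derive g x -> g x = l ->
  filterlim g (within D (locally x)) (locally l).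
Proof.
  intros H E. eapply filterlim_filter_le_1; [apply filter_le_within|]. rewrite <- E. apply cont_R; auto.
Qed.

Lemma lim3a c : 0 < c -> filterlim (sig3_1 c) (at_right 0) (Rbar_locally p_infty).
Proof.
  intros Hc. unfold sig3_1. apply (lim_inv_pinf (at_right 0) (fun t => c * sinh t)).
  refine (lim_to_right0 _ _ _ _).
  - apply lim_cont_within. unfold sinh; auto_derive; auto. rewrite sinh_0; ring.
  - apply at_right_forall. intros t Ht. assert (H := sinh_pos t Ht). nra.
Qed.

Lemma lim3b c : 0 < c -> filterlim (sig3_1 c) (Rbar_locally p_infty) (locally 0).
Proof.
  intros Hc P [eps HP]. unfold filtermap.
  exists (Rmax 1 (2 / (c * eps))). intros t Ht.
  assert (Q1 := Rmax_l 1 (2 / (c * eps))). assert (Q2 := Rmax_r 1 (2 / (c * eps))).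
  assert (He := cond_pos eps).
  assert (A1 : 1 + t < exp t) by (apply exp_ineq1; lra).
  assert (A2 : exp (- t) < 1) by (rewrite <- exp_0; apply exp_increasing; lra).
  assert (S : t / 2 < sinh t) by (unfold sinh; lra).
  assert (T : c * eps * t > 2) by (assert (c * eps * t > c * eps * (2 / (c * eps))) by (apply Rmult_lt_compat_l; [apply Rmult_lt_0_compat|]; lra);
     replace (c * eps * (2 / (c * eps))) with 2 in H by (field; lra); lra).
  apply HP. unfold ball; simpl; unfold AbsRing_ball, abs, minus, plus, opp; simpl.
  unfold sig3_1. assert (P1 : 0 < c * sinh t) by nra.
  rewrite Ropp_0, Rplus_0_r, Rabs_pos_eq by (left; apply Rinv_0_lt_compat; auto).
  assert (P2 : c * sinh t * eps > 1) by nra.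
  apply (Rmult_lt_reg_l (c * sinh t)); auto. rewrite Rinv_r by lra. lra.
Qed.

Lemma sin_pos_near0 : locally 0 (fun t => 0 < t -> 0 < sin t).
Proof.
  exists (mkposreal PI PI_RGT_0). intros t Ht Hp. unfold ball in Ht; simpl in Ht.
  unfold AbsRing_ball, abs, minus, plus, opp in Ht; simpl in Ht.
  apply Rabs_lt_between in Ht. apply sin_gt_0; lra.
Qed.

Lemma sin_pos_nearPI : locally PI (fun t => t < PI -> 0 < sin t).
Proof.
  exists (mkposreal PI PI_RGT_0). intros t Ht Hp. unfold ball in Ht; simpl in Ht.
  unfold AbsRing_ball, abs, minus, plus, opp in Ht; simpl in Ht.
  apply Rabs_lt_between in Ht. apply sin_gt_0; lra.
Qed.

Lemma lim_invsin0 c : 0 < c -> filterlim (fun t => / (c * sin t)) (at_right 0) (Rbar_locally p_infty).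
Proof.
  intros Hc. apply (lim_inv_pinf (at_right 0) (fun t => c * sin t)).
  refine (lim_to_right0 _ _ _ _).
  - apply lim_cont_within. auto_derive; auto. rewrite sin_0; ring.
  - unfold at_right, within. eapply filter_imp; [|exact sin_pos_near0]. intros t H Ht.
    specialize (H Ht). nra.
Qed.

Lemma lim_invsinPI c : 0 < c -> filterlim (fun t => / (c * sin t)) (at_left PI) (Rbar_locally p_infty).
Proof.
  intros Hc. apply (lim_inv_pinf (at_left PI) (fun t => c * sin t)).
  refine (lim_to_right0 _ _ _ _).
  - apply lim_cont_within. auto_derive; auto. rewrite sin_PI; ring.
  - unfold at_left, within. eapply filter_imp; [|exact sin_pos_nearPI]. intros t H Ht.
    specialize (H Ht). nra.
Qed.

Lemma lim4_2_0 c e be : 0 < c -> (e = 1 \/ e = -1) ->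
  filterlim (sig4_2 c e be) (at_right 0)
       (Rbar_locally (if Rlt_dec 0 e then p_infty else m_infty)).
Proof.
  intros Hc He.
  assert (Hu := lim_invsin0 1 Rlt_0_1).
  eapply filterlim_ext_loc with (f := fun t => (e / c) * (cos t * / (1 * sin t)) + be).
  { apply filter_forall. intros t. unfold sig4_2. rewrite Rmult_1_l. unfold Rdiv. ring. }
  assert (Hv : at_right 0 (fun t => 1/2 < cos t)).
  { apply loc_within. apply loc_gt. auto_derive; auto. rewrite cos_0; lra. }
  destruct (lim_combo (at_right 0) _ _ (e / c) be Hu Hv) as [A B].
  destruct He; subst.
  - destruct (Rlt_dec 0 1); [|lra]. apply A. apply Rdiv_lt_0_compat; lra.
  - destruct (Rlt_dec 0 (-1)); [lra|]. apply B. unfold Rdiv. 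
    assert (0 < / c) by (apply Rinv_0_lt_compat; lra). nra.
Qed.

Lemma lim4_2_PI c e be : 0 < c -> (e = 1 \/ e = -1) ->
  filterlim (sig4_2 c e be) (at_left PI)
       (Rbar_locally (if Rlt_dec 0 e then m_infty else p_infty)).
Proof.
  intros Hc He.
  assert (Hu := lim_invsinPI 1 Rlt_0_1).
  eapply filterlim_ext_loc with (f := fun t => (- e / c) * ((- cos t) * / (1 * sin t)) + be).
  { apply filter_forall. intros t. unfold sig4_2. rewrite Rmult_1_l. unfold Rdiv. ring. }
  assert (Hv : at_left PI (fun t => 1/2 < - cos t)).
  { apply loc_within. apply (loc_gt (fun t => - cos t)). auto_derive; auto. rewrite cos_PI; lra. }
  destruct (lim_combo (at_left PI) _ _ (- e / c) be Hu Hv) as [A B].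
  assert (0 < / c) by (apply Rinv_0_lt_compat; lra).
  destruct He; subst.
  - destruct (Rlt_dec 0 1); [|lra]. apply B. unfold Rdiv. nra.
  - destruct (Rlt_dec 0 (-1)); [lra|]. apply A. unfold Rdiv. nra.
Qed.


Lemma not_cl_left (b : Rbar) x1 x2 : at_right 0 (fun t => Rbar_lt t b) ->
  filterlim x1 (at_right 0) (Rbar_locally p_infty) -> ~ complete_left 0 b x1 x2.
Proof.
  intros Hb Hl [y1 [y2 [Hg Hag]]].
  assert (Hb0 : Rbar_lt 0 b).
  { destruct (filter_ex _ (filter_and _ _ Hb (at_right_forall 0 (fun t => 0 < t) (fun t H => H)))) as [t [H1 H2]].
    destruct b; simpl in *; auto; lra. }
  destruct (Hg 0) as [_ [Hd _]]; [split; simpl; auto|].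
  destruct (Hd i1) as [Hd1 _]. simpl in Hd1.
  apply (blowup (at_right 0) y1 x1 0); auto.
  - apply filter_le_within.
  - apply cont_R; auto.
  - generalize (filter_and _ _ Hb (at_right_forall 0 (fun t => 0 < t) (fun t H => H))).
    apply filter_imp. intros t [H1 H2]. apply Hag. split; simpl; auto.
Qed.

Lemma not_cl_right x1 x2 : filterlim x1 (at_left PI) (Rbar_locally p_infty) -> ~ complete_right 0 PI x1 x2.
Proof.
  intros Hl [y1 [y2 [Hg Hag]]].
  assert (HP := PI_RGT_0).
  destruct (Hg PI) as [_ [Hd _]]; [split; simpl; auto|].
  destruct (Hd i1) as [Hd1 _]. simpl in Hd1.
  apply (blowup (at_left PI) y1 x1 PI); auto.
  - apply filter_le_within.
  - apply cont_R; auto.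
  - unfold at_left, within. exists (mkposreal PI PI_RGT_0). intros t Ht Hp.
    unfold ball in Ht; simpl in Ht.
    unfold AbsRing_ball, abs, minus, plus, opp in Ht; simpl in Ht.
    apply Rabs_lt_between in Ht. apply Hag. split; simpl; lra.
Qed.

Lemma der3 c e be t : 0 < c -> 0 < t ->
  is_derive (sig3_1 c) t (- cosh t / (c * sinh t ^ 2)) /\ is_derive (sig3_2 c e be) t (- e / (c * sinh t ^ 2)).
Proof.
  intros Hc Ht. unfold sig3_1, sig3_2.
  assert (Hs := sinh_pos t Ht).
  assert (HE : exp t > 0) by apply exp_pos.
  assert (Hs' : exp t - / exp t <> 0) by (unfold sinh in Hs; rewrite exp_Ropp in Hs; lra).
  assert (Hs'' : exp t * exp t - 1 <> 0).
  { intro Z; apply Hs'. replace (exp t - / exp t) with ((exp t * exp t - 1) / exp t) by (field; lra).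
    rewrite Z; field; lra. }
  unfold sinh, cosh in *.
  split; auto_derive; [repeat split; nz | rewrite !exp_Ropp; set (X := exp t) in *; field; repeat split; lra
                      |repeat split; nz | rewrite !exp_Ropp; set (X := exp t) in *; field; repeat split; lra].
Qed.

Lemma der4 c e be t : 0 < c -> 0 < t < PI ->
  is_derive (sig4_1 c) t (- cos t / (c * sin t ^ 2)) /\ is_derive (sig4_2 c e be) t (- e / (c * sin t ^ 2)).
Proof.
  intros Hc Ht. unfold sig4_1, sig4_2.
  assert (Hs : 0 < sin t) by (apply sin_gt_0; lra).
  assert (H2 : sin t ^ 2 + cos t ^ 2 = 1) by (rewrite <- (sin2_cos2 t); unfold Rsqr; ring).
  split.
  - auto_derive; [repeat split; nz | field; repeat split; lra].
  - auto_derive; [repeat split; nz | ].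
    transitivity (- e * (sin t ^ 2 + cos t ^ 2) / (c * sin t ^ 2)); [field; repeat split; lra|].
    rewrite H2; field; repeat split; lra.
Qed.

Lemma sgn_m1 : sgn (-1) = -1.
Proof. unfold sgn. destruct (Rlt_dec 0 (-1)); [lra|]. destruct (Rlt_dec (-1) 0); lra. Qed.
Lemma sgn_1 : sgn 1 = 1.
Proof. unfold sgn. destruct (Rlt_dec 0 1); lra. Qed.

Lemma ld3 c e be t : 0 < c -> (e = 1 \/ e = -1) -> 0 < t -> len_density (sig3_1 c) (sig3_2 c e be) t = -1.
Proof.
  intros Hc He Ht. destruct (der3 c e be t Hc Ht) as [A B].
  assert (G : gnorm (sig3_1 c) (sig3_2 c e be) t = -1).
  { unfold gnorm. rewrite (is_derive_unique _ _ _ A), (is_derive_unique _ _ _ B). unfold sig3_1.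
    assert (Hs := sinh_pos t Ht).
    assert (HE : exp t > 0) by apply exp_pos.
    assert (Hs' : exp t - / exp t <> 0) by (unfold sinh in Hs; rewrite exp_Ropp in Hs; lra).
    assert (Hs'' : exp t * exp t - 1 <> 0).
    { intro Z; apply Hs'. replace (exp t - / exp t) with ((exp t * exp t - 1) / exp t) by (field; lra).
      rewrite Z; field; lra. }
    unfold sinh, cosh in *. rewrite !exp_Ropp. set (X := exp t) in *.
    destruct He; subst; field; repeat split; lra. }
  unfold len_density. rewrite G, sgn_m1, Rabs_left by lra. replace (- -1) with 1 by ring. rewrite sqrt_1; ring.
Qed.

Lemma ld4 c e be t : 0 < c -> (e = 1 \/ e = -1) -> 0 < t < PI -> len_density (sig4_1 c) (sig4_2 c e be) t = 1.
Proof.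
  intros Hc He Ht. destruct (der4 c e be t Hc Ht) as [A B].
  assert (G : gnorm (sig4_1 c) (sig4_2 c e be) t = 1).
  { unfold gnorm. rewrite (is_derive_unique _ _ _ A), (is_derive_unique _ _ _ B). unfold sig4_1.
    assert (Hs : 0 < sin t) by (apply sin_gt_0; lra).
    assert (H2 : sin t ^ 2 + cos t ^ 2 = 1) by (rewrite <- (sin2_cos2 t); unfold Rsqr; ring).
    transitivity ((e ^ 2 - cos t ^ 2) / sin t ^ 2); [field; repeat split; lra|].
    replace (e ^ 2) with 1 by (destruct He; subst; ring).
    replace (1 - cos t ^ 2) with (sin t ^ 2) by lra. field; lra. }
  unfold len_density. rewrite G, sgn_1, Rabs_R1, sqrt_1. ring.
Qed.

Lemma RInt_c (f : R -> R) k u v : (forall x, Rmin u v < x < Rmax u v -> f x = k) -> RInt f u v = (v - u) * k.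
Proof.
  intros H. rewrite (RInt_ext f (fun _ => k)) by auto. rewrite RInt_const. reflexivity.
Qed.

Lemma len3 c e be : 0 < c -> (e = 1 \/ e = -1) -> total_length 0 p_infty (sig3_1 c) (sig3_2 c e be) m_infty.
Proof.
  intros Hc He. exists 1. split; [split; simpl; auto; lra|].
  exists (Finite (-1)), m_infty. split; [|split].
  - apply filterlim_ext_loc with (f := fun u => 1 * u + -1).
    + apply at_right_forall. intros u Hu. rewrite (RInt_c _ (-1)); [ring|].
      intros x Hx. apply ld3; auto. assert (Rmin u 1 > 0) by (apply Rmin_glb_lt; lra). lra.
    + simpl. apply lim_cont_within. auto_derive; auto. ring.
  - intros P [M HP]. exists (Rmax 1 (1 - M)). intros v Hv. unfold filtermap.
    assert (Q1 := Rmax_l 1 (1 - M)). assert (Q2 := Rmax_r 1 (1 - M)).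
    rewrite (RInt_c _ (-1)). apply HP; lra.
    intros x Hx. apply ld3; auto. assert (Rmin 1 v > 0) by (apply Rmin_glb_lt; lra). lra.
  - reflexivity.
Qed.

Lemma len4 c e be : 0 < c -> (e = 1 \/ e = -1) -> total_length 0 PI (sig4_1 c) (sig4_2 c e be) (Finite PI).
Proof.
  intros Hc He. assert (HP := PI_RGT_0).
  exists (PI / 2). split; [split; simpl; lra|].
  exists (Finite (PI/2)), (Finite (PI/2)). split; [|split].
  - apply filterlim_ext_loc with (f := fun u => (-1) * u + PI / 2).
    + unfold at_right, within. exists (mkposreal PI PI_RGT_0). intros u Hu Hp.
      unfold ball in Hu; simpl in Hu.
      unfold AbsRing_ball, abs, minus, plus, opp in Hu; simpl in Hu.
      apply Rabs_lt_between in Hu.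
      rewrite (RInt_c _ 1); [ring|].
      intros x Hx. apply ld4; auto. assert (Rmin u (PI/2) > 0) by (apply Rmin_glb_lt; lra).
      assert (Rmax u (PI/2) < PI) by (apply Rmax_lub_lt; lra). lra.
    + simpl. apply lim_cont_within. auto_derive; auto. ring.
  - apply filterlim_ext_loc with (f := fun v => 1 * v + - (PI / 2)).
    + unfold at_left, within. exists (mkposreal (PI/2) ltac:(lra)). intros u Hu Hp.
      unfold ball in Hu; simpl in Hu.
      unfold AbsRing_ball, abs, minus, plus, opp in Hu; simpl in Hu.
      apply Rabs_lt_between in Hu.
      rewrite (RInt_c _ 1); [ring|].
      intros x Hx. apply ld4; auto. assert (Rmin (PI/2) u > 0) by (apply Rmin_glb_lt; lra).
      assert (Rmax (PI/2) u < PI) by (apply Rmax_lub_lt; lra). lra.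
    + simpl. apply lim_cont_within. auto_derive; auto. field.
  - unfold is_Rbar_plus; simpl. do 2 f_equal. field.
Qed.


Lemma geo_facts a b x1 x2 : geodesic a b x1 x2 -> forall t, in_dom a b t ->
  0 < x1 t /\ is_derive x1 t (Derive x1 t) /\ is_derive x2 t (Derive x2 t) /\
  is_derive (Derive x1) t (Derive (Derive x1) t) /\ is_derive (Derive x2) t (Derive (Derive x2) t) /\
  Derive (Derive x1) t = (Derive x1 t ^ 2 + Derive x2 t ^ 2) / x1 t /\
  Derive (Derive x2) t = 2 * Derive x1 t * Derive x2 t / x1 t.
Proof.
  intros G t Ht. destruct (G t Ht) as (P & D & E).
  destruct (D i1) as [A1 B1]; destruct (D i2) as [A2 B2]; simpl in *.
  assert (E1 := E i1); assert (E2 := E i2); simpl in E1, E2.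
  repeat match goal with |- _ /\ _ => split end; auto; try (apply Derive_correct; auto).
  - apply (Rplus_eq_reg_r (- ((Derive x1 t ^ 2 + Derive x2 t ^ 2) / x1 t))).
    rewrite Rplus_opp_r. transitivity (Derive (Derive x1) t + (- / x1 t * Derive x1 t * Derive x1 t + 0 * Derive x1 t * Derive x2 t + 0 * Derive x2 t * Derive x1 t + - / x1 t * Derive x2 t * Derive x2 t)); [field; lra| exact E1].
  - apply (Rplus_eq_reg_r (- (2 * Derive x1 t * Derive x2 t / x1 t))).
    rewrite Rplus_opp_r. transitivity (Derive (Derive x2) t + (0 * Derive x1 t * Derive x1 t + - / x1 t * Derive x1 t * Derive x2 t + - / x1 t * Derive x2 t * Derive x1 t + 0 * Derive x2 t * Derive x2 t)); [field; lra| exact E2].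
Qed.

Lemma x2_det a b (x2 g dg : R -> R) t0 :
  (forall t, in_dom a b t -> is_derive x2 t (dg t) /\ is_derive g t (dg t)) -> in_dom a b t0 ->
  forall t, in_dom a b t -> x2 t = g t + (x2 t0 - g t0).
Proof.
  intros H H0 t Ht.
  assert (C := const_on a b (fun t => x2 t - g t)
    ltac:(intros s Hs; destruct (H s Hs) as [A B];
          replace 0 with (dg s - dg s) by ring; apply (is_derive_minus x2 g); auto) t t0 Ht H0).
  simpl in C. lra.
Qed.

Lemma u_det a b E (u up w wp : R -> R) t0 :
  (forall t, in_dom a b t -> is_derive u t (up t) /\ is_derive up t (- E * u t)) ->
  (forall t, in_dom a b t -> is_derive w t (wp t) /\ is_derive wp t (- E * w t)) ->
  in_dom a b t0 -> u t0 = w t0 -> up t0 = wp t0 ->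
  forall t, in_dom a b t -> u t = w t.
Proof.
  intros Hu Hw H0 E1 E2 t Ht.
  assert (Z := uniq2 a b E (fun t => u t - w t) (fun t => up t - wp t) t0
    ltac:(intros s Hs; destruct (Hu s Hs) as [A B]; destruct (Hw s Hs) as [C D]; split;
      [apply (is_derive_minus u w); auto
      | replace (- E * (u s - w s)) with (- E * u s - - E * w s) by ring; apply (is_derive_minus up wp); auto])
    H0 ltac:(lra) ltac:(lra) t Ht).
  lra.
Qed.


Definition CONCL a b x1 x2 :=
     (exists al, reparam_of a b x1 x2 m_infty p_infty sig1_1 (sig1_2 al)) \/
     (exists al e, (e = 1 \/ e = -1) /\
        reparam_of a b x1 x2 0 p_infty sig2_1 (sig2_2 e al)) \/
     (exists c be e, 0 < c /\ (e = 1 \/ e = -1) /\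
        reparam_of a b x1 x2 0 p_infty (sig3_1 c) (sig3_2 c e be)) \/
     (exists c be e, 0 < c /\ (e = 1 \/ e = -1) /\
        reparam_of a b x1 x2 0 PI (sig4_1 c) (sig4_2 c e be)).

Ltac ad2 := auto_derive; [repeat split; try (eexists; eassumption); try nz | fixD].

Section Main.
Variables (a b : Rbar) (x1 x2 : R -> R) (t0 : R).
Hypothesis G : geodesic a b x1 x2.
Hypothesis H0 : in_dom a b t0.

Let F := geo_facts a b x1 x2 G.
Definition K0 := Derive x2 t0 / x1 t0 ^ 2.
Definition E0 := (- Derive x1 t0 ^ 2 + Derive x2 t0 ^ 2) / x1 t0 ^ 2.
Definition u0 := / x1 t0.
Definition v0 := - Derive x1 t0 / x1 t0 ^ 2.

Lemma HK : forall t, in_dom a b t -> Derive x2 t = K0 * x1 t ^ 2.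
Proof.
  intros t Ht.
  assert (D : forall s, in_dom a b s -> is_derive (fun t => Derive x2 t / x1 t ^ 2) s 0).
  { intros s Hs; destruct (F s Hs) as (P & A1 & A2 & B1 & B2 & E1 & E2).
    ad2. rewrite E2; field; lra. }
  assert (C := const_on a b _ D t t0 Ht H0).
  simpl in C. unfold K0. destruct (F t Ht) as [P _]. assert (Derive x2 t / x1 t ^ 2 = Derive x2 t0 / x1 t0 ^ 2) by (simpl; exact C). replace (Derive x2 t) with ((Derive x2 t / x1 t ^ 2) * x1 t ^ 2) by (field; lra). rewrite H. reflexivity.
Qed.

Lemma HE : forall t, in_dom a b t -> (- Derive x1 t ^ 2 + Derive x2 t ^ 2) / x1 t ^ 2 = E0.
Proof.
  intros t Ht.
  apply (const_on a b (fun t => (- Derive x1 t ^ 2 + Derive x2 t ^ 2) / x1 t ^ 2)); auto.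
  intros s Hs; destruct (F s Hs) as (P & A1 & A2 & B1 & B2 & E1 & E2).
  ad2; rewrite E1, E2; field; lra.
Qed.

Lemma Hu : forall t, in_dom a b t ->
  is_derive (fun t => / x1 t) t (- Derive x1 t / x1 t ^ 2) /\
  is_derive (fun t => - Derive x1 t / x1 t ^ 2) t (- E0 * / x1 t).
Proof.
  intros t Ht. destruct (F t Ht) as (P & A1 & A2 & B1 & B2 & E1 & E2).
  split; ad2.
  - field; lra.
  - rewrite E1, <- (HE t Ht). field. lra.
Qed.

Lemma Hrel : v0 ^ 2 = K0 ^ 2 - E0 * u0 ^ 2.
Proof. destruct (F t0 H0) as [P _]. unfold v0, K0, E0, u0. field. lra. Qed.

Lemma u0_pos : 0 < u0.
Proof. destruct (F t0 H0) as [P _]. unfold u0. apply Rinv_0_lt_compat; auto. Qed.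

End Main.


Lemma sq1 e : e ^ 2 = 1 -> e = 1 \/ e = -1.
Proof. intros H. assert ((e - 1) * (e + 1) = 0) by (simpl in H; lra).
  destruct (Rmult_integral _ _ H0); [left|right]; lra. Qed.

Lemma sinh_pos_inv s : 0 < sinh s -> 0 < s.
Proof. intros H. destruct (Rlt_le_dec 0 s); auto. exfalso. unfold sinh in H.
  assert (exp s <= exp (- s)) by (destruct (Req_dec s 0); [subst; rewrite Ropp_0; lra| left; apply exp_increasing; lra]). lra. Qed.

Lemma cosh_pos' s : 0 < cosh s.
Proof. unfold cosh. assert (exp s > 0) by apply exp_pos. assert (exp (-s) > 0) by apply exp_pos. lra. Qed.

Lemma cosh_sinh s : cosh s ^ 2 - sinh s ^ 2 = 1.
Proof. unfold cosh, sinh. rewrite exp_Ropp. assert (exp s > 0) by apply exp_pos. field. lra. Qed.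

Lemma sin_cos_sq s : sin s ^ 2 + cos s ^ 2 = 1.
Proof. rewrite <- (sin2_cos2 s); unfold Rsqr; ring. Qed.


Lemma der_sinh p q t : is_derive (fun t => sinh (p * t + q)) t (p * cosh (p * t + q)).
Proof. unfold sinh, cosh. auto_derive; auto. unfold Rminus. field. Qed.
Lemma der_cosh p q t : is_derive (fun t => cosh (p * t + q)) t (p * sinh (p * t + q)).
Proof. unfold sinh, cosh. auto_derive; auto. unfold Rminus. field. Qed.
Lemma der_coth p q t : 0 < p * t + q ->
  is_derive (fun t => cosh (p * t + q) / sinh (p * t + q)) t (- p / sinh (p * t + q) ^ 2).
Proof.
  intros H. assert (Hs := sinh_pos _ H). assert (Hc := cosh_sinh (p * t + q)).
  assert (A : is_derive (fun t => cosh (p * t + q) * / sinh (p * t + q)) t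
    (p * sinh (p * t + q) * / sinh (p * t + q) + cosh (p * t + q) * (- (p * cosh (p * t + q)) / (sinh (p * t + q) ^ 2)))).
  { apply (is_derive_mult (fun t => cosh (p * t + q)) (fun t => / sinh (p * t + q))).
    - apply der_cosh.
    - apply (is_derive_inv (fun t => sinh (p * t + q))); [apply der_sinh| lra].
    - intros; apply Rmult_comm. }
  replace (- p / sinh (p * t + q) ^ 2) with (p * sinh (p * t + q) * / sinh (p * t + q) + cosh (p * t + q) * (- (p * cosh (p * t + q)) / (sinh (p * t + q) ^ 2))).
  - exact A.
  - transitivity (- p * (cosh (p * t + q) ^ 2 - sinh (p * t + q) ^ 2) / sinh (p * t + q) ^ 2); [field; lra|].
    rewrite Hc. field. lra.
Qed.

Section Cases.
Variables (a b : Rbar) (x1 x2 : R -> R) (t0 : R).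
Hypothesis G : geodesic a b x1 x2.
Hypothesis H0 : in_dom a b t0.

Lemma udet (w wp : R -> R) :
  (forall t, in_dom a b t -> is_derive w t (wp t) /\ is_derive wp t (- E0 x1 x2 t0 * w t)) ->
  w t0 = u0 x1 t0 -> wp t0 = v0 x1 t0 -> forall t, in_dom a b t -> / x1 t = w t.
Proof.
  intros Hw E1 E2 t Ht.
  apply (u_det a b (E0 x1 x2 t0) (fun t => / x1 t) (fun t => - Derive x1 t / x1 t ^ 2) w wp t0); auto.
  intros s Hs. apply (Hu a b x1 x2 t0 G H0 s Hs).
Qed.

Lemma x1_pos t : in_dom a b t -> 0 < x1 t.
Proof. intros Ht. destruct (geo_facts a b x1 x2 G t Ht); auto. Qed.

Lemma x1_of_u t w : in_dom a b t -> / x1 t = w -> x1 t = / w.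
Proof. intros Ht E. rewrite <- E. rewrite Rinv_inv. auto. Qed.

Lemma x2_det' (g : R -> R) :
  (forall t, in_dom a b t -> is_derive g t (K0 x1 x2 t0 * x1 t ^ 2)) ->
  forall t, in_dom a b t -> x2 t = g t + (x2 t0 - g t0).
Proof.
  intros Hg. apply (x2_det a b x2 g (fun t => Derive x2 t)); auto.
  intros t Ht. destruct (geo_facts a b x1 x2 G t Ht) as (P & A1 & A2 & _).
  split; auto. rewrite (HK a b x1 x2 t0 G H0 t Ht). auto.
Qed.

Lemma caseK0 : K0 x1 x2 t0 = 0 -> nonconstant a b x1 x2 ->
  exists al, reparam_of a b x1 x2 m_infty p_infty sig1_1 (sig1_2 al).
Proof.
  intros HK0 NC.
  assert (Hx2 : forall t, in_dom a b t -> x2 t = x2 t0).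
  { intros t Ht. apply (const_on a b x2); auto. intros s Hs.
    destruct (geo_facts a b x1 x2 G s Hs) as (P & A1 & A2 & _).
    rewrite (HK a b x1 x2 t0 G H0 s Hs), HK0, Rmult_0_l in A2. auto. }
  assert (Hr := Hrel a b x1 x2 t0 G H0). rewrite HK0 in Hr.
  assert (Hu0 := u0_pos a b x1 x2 t0 G H0).
  set (u := u0 x1 t0) in *. set (v := v0 x1 t0) in *. set (E := E0 x1 x2 t0) in *.
  set (B := - v / u).
  assert (HB2 : B ^ 2 = - E). { unfold B. apply (Rmult_eq_reg_r (u ^ 2)); [|apply pow_nonzero; lra].
    transitivity (v ^ 2); [field; lra | rewrite Hr; ring]. }
  assert (Hd : forall t, in_dom a b t -> is_derive (fun t => u * exp (- B * (t - t0))) t (- B * (u * exp (- B * (t - t0))))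
      /\ is_derive (fun t => - B * (u * exp (- B * (t - t0)))) t (- E * (u * exp (- B * (t - t0))))).
  { intros t Ht; split; auto_derive; auto; unfold Rminus; [ring| replace E with (- B ^ 2) by lra; ring]. }
  assert (Hw := udet (fun t => u * exp (- B * (t - t0))) (fun t => - B * (u * exp (- B * (t - t0)))) Hd).
  cbv beta in Hw. replace (t0 - t0) with 0 in Hw by ring. rewrite Rmult_0_r, exp_0, Rmult_1_r in Hw.
  specialize (Hw eq_refl). 
  assert (Hw' : forall t, in_dom a b t -> / x1 t = u * exp (- B * (t - t0))).
  { apply Hw. unfold B. fold v. fold u. field. lra. }
  clear Hw; rename Hw' into Hw.
  assert (Hx1 : forall t, in_dom a b t -> x1 t = exp (B * t + (- B * t0 - ln u))).
  { intros t Ht. rewrite (x1_of_u t _ Ht (Hw t Ht)).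
    replace (B * t + (- B * t0 - ln u)) with (- (- B * (t - t0)) + - ln u) by ring.
    rewrite exp_plus, !exp_Ropp, exp_ln by lra. assert (exp (- B * (t - t0)) > 0) by apply exp_pos.
    field. lra. }
  exists (x2 t0), B, (- B * t0 - ln u). split.
  - intro HB. destruct NC as [s [s' [Hs [Hs' Hne]]]]. apply Hne.
    rewrite (Hx1 s Hs), (Hx1 s' Hs'), (Hx2 s Hs), (Hx2 s' Hs'), HB. do 2 f_equal. ring.
  - intros s Hs. split; [split; simpl; auto|]. split.
    + unfold sig1_1. apply Hx1; auto.
    + unfold sig1_2. apply Hx2; auto.
Qed.

Lemma caseE0 : K0 x1 x2 t0 <> 0 -> E0 x1 x2 t0 = 0 ->
  exists al e, (e = 1 \/ e = -1) /\ reparam_of a b x1 x2 0 p_infty sig2_1 (sig2_2 e al).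
Proof.
  intros HK0 HE0.
  assert (Hr := Hrel a b x1 x2 t0 G H0). rewrite HE0 in Hr.
  assert (Hu0 := u0_pos a b x1 x2 t0 G H0).
  set (u := u0 x1 t0) in *. set (v := v0 x1 t0) in *. set (K := K0 x1 x2 t0) in *.
  assert (Hv : v <> 0) by (intro Z; rewrite Z in Hr; apply HK0; simpl in Hr; nra).
  set (q := u - v * t0).
  assert (Hd : forall t, in_dom a b t -> is_derive (fun t => v * t + q) t v
      /\ is_derive (fun _ => v) t (- E0 x1 x2 t0 * (v * t + q))).
  { intros t Ht; split; auto_derive; auto; rewrite ?HE0; ring. }
  assert (Hw := udet _ _ Hd ltac:(cbv beta; unfold q, u; ring) eq_refl).
  assert (Hpos : forall t, in_dom a b t -> 0 < v * t + q).
  { intros t Ht. rewrite <- (Hw t Ht). apply Rinv_0_lt_compat, x1_pos; auto. }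
  assert (Hx1 : forall t, in_dom a b t -> x1 t = / (v * t + q)).
  { intros t Ht. apply x1_of_u; auto. }
  set (e := - K / v).
  assert (He : e = 1 \/ e = -1). { apply sq1. unfold e. apply (Rmult_eq_reg_r (v ^ 2)); [|apply pow_nonzero; auto].
    transitivity (K ^ 2); [field; auto| rewrite Hr; ring]. }
  assert (Hx2 := x2_det' (fun t => e * / (v * t + q))
     ltac:(intros t Ht; assert (Hp := Hpos t Ht); rewrite (Hx1 t Ht); auto_derive; [lra| unfold e, K; field; lra])).
  exists (x2 t0 - e * / (v * t0 + q)), e. split; auto.
  exists v, q. split; auto. intros s Hs. split; [split; simpl; auto; apply Hpos; auto|]. split.
  - unfold sig2_1. apply Hx1; auto.
  - unfold sig2_2. apply Hx2; auto.
Qed.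

Lemma caseEpos : K0 x1 x2 t0 <> 0 -> 0 < E0 x1 x2 t0 ->
  exists c be e, 0 < c /\ (e = 1 \/ e = -1) /\ reparam_of a b x1 x2 0 PI (sig4_1 c) (sig4_2 c e be).
Proof.
  intros HK0 HE0.
  assert (Hr := Hrel a b x1 x2 t0 G H0).
  assert (Hu0 := u0_pos a b x1 x2 t0 G H0).
  set (u := u0 x1 t0) in *. set (v := v0 x1 t0) in *. set (K := K0 x1 x2 t0) in *.
  set (E := E0 x1 x2 t0) in *.
  set (m := sqrt E). assert (Hm : m * m = E) by (apply sqrt_sqrt; lra).
  assert (Hm0 : 0 < m) by (apply sqrt_lt_R0; lra).
  set (kk := Rabs K). assert (Hkk0 : 0 < kk) by (apply Rabs_pos_lt; auto).
  assert (Hkk : kk ^ 2 = K ^ 2) by (unfold kk; apply pow2_abs).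
  set (c := kk / m). assert (Hc : 0 < c) by (unfold c; apply Rdiv_lt_0_compat; auto).
  set (X := v / kk).
  assert (HX : X ^ 2 < 1).
  { unfold X. assert (v ^ 2 < kk ^ 2) by (rewrite Hkk, Hr; assert (0 < E * u ^ 2) by (apply Rmult_lt_0_compat; [lra| apply pow_lt; lra]); lra).
    replace ((v / kk) ^ 2) with (v ^ 2 / kk ^ 2) by (field; lra).
    apply (Rmult_lt_reg_r (kk ^ 2)); [apply pow_lt; lra|]. replace (v ^ 2 / kk ^ 2 * kk ^ 2) with (v ^ 2) by (field; lra). lra. }
  assert (HX1 : -1 < X < 1) by (split; nra).
  set (s0 := acos X). assert (Hs0 : 0 < s0 < PI) by (apply acos_bound_lt; auto).
  assert (Hcos : cos s0 = X) by (apply cos_acos; lra).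
  assert (Hsin : sin s0 = m * u / kk).
  { unfold s0. rewrite sin_acos by lra. replace (1 - X²) with (Rsqr (m * u / kk)).
    - apply sqrt_Rsqr. apply Rdiv_le_0_compat; [apply Rmult_le_pos|]; lra.
    - unfold Rsqr, X. apply (Rmult_eq_reg_r (kk ^ 2)); [|apply pow_nonzero; lra].
      transitivity (m * m * u ^ 2); [field; lra|]. transitivity (kk ^ 2 - v ^ 2); [|field; lra].
      rewrite Hkk, Hr, Hm. ring. }
  set (q := s0 - m * t0).
  assert (Hd : forall t, in_dom a b t -> is_derive (fun t => c * sin (m * t + q)) t (c * m * cos (m * t + q))
      /\ is_derive (fun t => c * m * cos (m * t + q)) t (- E * (c * sin (m * t + q)))).
  { intros t Ht; split; auto_derive; auto; [ring| rewrite <- Hm; ring]. }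
  assert (Hw := udet _ _ Hd).
  cbv beta in Hw. replace (m * t0 + q) with s0 in Hw by (unfold q; ring).
  assert (Hw' : forall t, in_dom a b t -> / x1 t = c * sin (m * t + q)).
  { apply Hw.
    - rewrite Hsin. fold u. unfold c. field. lra.
    - rewrite Hcos. fold v. unfold c, X. field. lra. }
  clear Hw; rename Hw' into Hw.
  assert (Hin : forall t, in_dom a b t -> 0 < m * t + q < PI).
  { intros t Ht. assert (Hs0' : m * t0 + q = s0) by (unfold q; ring).
    split.
    - destruct (Rlt_le_dec 0 (m * t + q)) as [?|Hle]; auto. exfalso.
      set (t' := - q / m). assert (Ht'e : m * t' + q = 0) by (unfold t'; field; lra).
      assert (t <= t') by (apply (Rmult_le_reg_l m); lra).
      assert (t' < t0) by (apply (Rmult_lt_reg_l m); lra).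
      assert (Ht' : in_dom a b t') by (apply (in_dom_between a b t t0); auto; lra).
      assert (P := x1_pos t' Ht'). assert (Q := Hw t' Ht'). rewrite Ht'e, sin_0, Rmult_0_r in Q.
      assert (0 < / x1 t') by (apply Rinv_0_lt_compat; auto). lra.
    - destruct (Rlt_le_dec (m * t + q) PI) as [?|Hle]; auto. exfalso.
      set (t' := (PI - q) / m). assert (Ht'e : m * t' + q = PI) by (unfold t'; field; lra).
      assert (t' <= t) by (apply (Rmult_le_reg_l m); lra).
      assert (t0 < t') by (apply (Rmult_lt_reg_l m); lra).
      assert (Ht' : in_dom a b t') by (apply (in_dom_between a b t0 t); auto; lra).
      assert (P := x1_pos t' Ht'). assert (Q := Hw t' Ht'). rewrite Ht'e, sin_PI, Rmult_0_r in Q.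
      assert (0 < / x1 t') by (apply Rinv_0_lt_compat; auto). lra. }
  assert (Hx1 : forall t, in_dom a b t -> x1 t = / (c * sin (m * t + q))).
  { intros t Ht. apply x1_of_u; auto. }
  set (e := - K / kk).
  assert (He : e = 1 \/ e = -1).
  { unfold e, kk. destruct (Rcase_abs K).
    - rewrite Rabs_left by auto. left. field. lra.
    - rewrite Rabs_right by auto. right. field. lra. }
  assert (Hx2 := x2_det' (fun t => e * (cos (m * t + q) / sin (m * t + q)) / c)
     ltac:(intros t Ht; assert (Hp := Hin t Ht); assert (Hs : 0 < sin (m * t + q)) by (apply sin_gt_0; lra);
           rewrite (Hx1 t Ht); auto_derive; [repeat split; lra| ];
           transitivity (- e * m * (sin (m * t + q) ^ 2 + cos (m * t + q) ^ 2) / (c * sin (m * t + q) ^ 2));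
           [field; lra| rewrite sin_cos_sq; unfold e, c, K; field; repeat split; lra])).
  exists c, (x2 t0 - e * (cos (m * t0 + q) / sin (m * t0 + q)) / c), e. split; auto. split; auto.
  exists m, q. split; [lra|]. intros s Hs. split; [split; simpl; apply Hin; auto|]. split.
  - unfold sig4_1. apply Hx1; auto.
  - unfold sig4_2. apply Hx2; auto.
Qed.

Lemma caseEneg : K0 x1 x2 t0 <> 0 -> E0 x1 x2 t0 < 0 ->
  exists c be e, 0 < c /\ (e = 1 \/ e = -1) /\ reparam_of a b x1 x2 0 p_infty (sig3_1 c) (sig3_2 c e be).
Proof.
  intros HK0 HE0.
  assert (Hr := Hrel a b x1 x2 t0 G H0).
  assert (Hu0 := u0_pos a b x1 x2 t0 G H0).
  set (u := u0 x1 t0) in *. set (v := v0 x1 t0) in *. set (K := K0 x1 x2 t0) in *.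
  set (E := E0 x1 x2 t0) in *.
  set (m := sqrt (- E)). assert (Hm : m * m = - E) by (apply sqrt_sqrt; lra).
  assert (Hm0 : 0 < m) by (apply sqrt_lt_R0; lra).
  set (kk := Rabs K). assert (Hkk0 : 0 < kk) by (apply Rabs_pos_lt; auto).
  assert (Hkk : kk ^ 2 = K ^ 2) by (unfold kk; apply pow2_abs).
  set (c := kk / m). assert (Hc : 0 < c) by (unfold c; apply Rdiv_lt_0_compat; auto).
  assert (Hkc : kk = c * m) by (unfold c; field; lra).
  set (Y := u / c). assert (HY : 0 < Y) by (unfold Y; apply Rdiv_lt_0_compat; auto).
  set (s0 := arcsinh Y). assert (Hsh : sinh s0 = Y) by apply sinh_arcsinh.
  assert (Hs0 : 0 < s0) by (apply sinh_pos_inv; lra).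
  set (ch := cosh s0). assert (Hch : 0 < ch) by apply cosh_pos'.
  assert (Hch2 : ch ^ 2 = 1 + Y ^ 2) by (rewrite <- Hsh; unfold ch; rewrite <- (cosh_sinh s0); ring).
  set (p := v / (c * ch)).
  assert (Hv2 : v ^ 2 = m * m * (c ^ 2 + u ^ 2)).
  { rewrite Hr, <- Hkk, Hkc. replace E with (- (m * m)) by lra. ring. }
  assert (Hp2 : p * p = m * m).
  { unfold p. assert (c ^ 2 * ch ^ 2 = c ^ 2 + u ^ 2) by (rewrite Hch2; unfold Y; field; lra).
    transitivity (v ^ 2 / (c ^ 2 * ch ^ 2)); [field; lra|]. rewrite H, Hv2. field.
    assert (0 < c ^ 2 + u ^ 2) by (assert (0 < c ^ 2) by (apply pow_lt; lra); assert (0 <= u ^ 2) by (apply pow_le; lra); lra). lra. }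
  assert (Hp0 : p <> 0) by (intro Z; rewrite Z in Hp2; nra).
  set (q := s0 - p * t0).
  assert (Hd : forall t, in_dom a b t -> is_derive (fun t => c * sinh (p * t + q)) t (c * (p * cosh (p * t + q)))
      /\ is_derive (fun t => c * (p * cosh (p * t + q))) t (- E * (c * sinh (p * t + q)))).
  { intros t Ht; split.
    - apply (is_derive_scal (fun t => sinh (p * t + q))). apply der_sinh.
    - replace (- E * (c * sinh (p * t + q))) with (c * (p * (p * sinh (p * t + q)))) by (rewrite <- Hm, <- Hp2; ring).
      apply (is_derive_scal (fun t => p * cosh (p * t + q))). apply (is_derive_scal (fun t => cosh (p * t + q))). apply der_cosh. }
  assert (Hw := udet _ _ Hd).
  cbv beta in Hw. replace (p * t0 + q) with s0 in Hw by (unfold q; ring).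
  assert (Hw' : forall t, in_dom a b t -> / x1 t = c * sinh (p * t + q)).
  { apply Hw.
    - rewrite Hsh. fold u. unfold Y. field. lra.
    - fold ch. fold v. unfold p. field. lra. }
  clear Hw; rename Hw' into Hw.
  assert (Hin : forall t, in_dom a b t -> 0 < p * t + q).
  { intros t Ht. apply sinh_pos_inv. assert (P := x1_pos t Ht). assert (Q := Hw t Ht).
    assert (0 < / x1 t) by (apply Rinv_0_lt_compat; auto). rewrite Q in H. nra. }
  assert (Hx1 : forall t, in_dom a b t -> x1 t = / (c * sinh (p * t + q))).
  { intros t Ht. apply x1_of_u; auto. }
  set (e := - K / (c * p)).
  assert (He : e = 1 \/ e = -1).
  { apply sq1. unfold e. transitivity (K ^ 2 / (c ^ 2 * (p * p))); [field; lra|].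
    rewrite Hp2, <- Hkk, Hkc. field. lra. }
  assert (Hg : forall t, in_dom a b t -> is_derive (fun t => e * (cosh (p * t + q) / sinh (p * t + q)) / c) t (K0 x1 x2 t0 * x1 t ^ 2)).
  { intros t Ht; assert (Hp := Hin t Ht); assert (Hs := sinh_pos _ Hp).
    rewrite (Hx1 t Ht).
    replace (K0 x1 x2 t0 * (/ (c * sinh (p * t + q))) ^ 2) with (e / c * (- p / sinh (p * t + q) ^ 2)).
    - assert (A : is_derive (fun t => e / c * (cosh (p * t + q) / sinh (p * t + q))) t (e / c * (- p / sinh (p * t + q) ^ 2)))
        by (apply (is_derive_scal (fun t => cosh (p * t + q) / sinh (p * t + q))); apply der_coth; auto).
      eapply is_derive_ext; [|exact A]. intros; simpl; unfold Rdiv; ring.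
    - unfold e, K; field; repeat split; lra. }
  assert (Hx2 := x2_det' _ Hg).
  exists c, (x2 t0 - e * (cosh (p * t0 + q) / sinh (p * t0 + q)) / c), e. split; auto. split; auto.
  exists p, q. split; auto. intros s Hs. split; [split; simpl; auto; apply Hin; auto|]. split.
  - unfold sig3_1. apply Hx1; auto.
  - unfold sig3_2. apply Hx2; auto.
Qed.

End Cases.


Lemma classify a b x1 x2 : geodesic a b x1 x2 -> nonconstant a b x1 x2 -> CONCL a b x1 x2.
Proof.
  intros G NC. destruct NC as [t0 [s [H0 R]]].
  assert (NC : nonconstant a b x1 x2) by (exists t0, s; auto).
  unfold CONCL.
  destruct (Req_dec (K0 x1 x2 t0) 0) as [HK|HK].
  - left. apply (caseK0 a b x1 x2 t0 G H0 HK NC).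
  - destruct (Rtotal_order (E0 x1 x2 t0) 0) as [HE|[HE|HE]].
    + right; right; left. apply (caseEneg a b x1 x2 t0 G H0 HK HE).
    + right; left. apply (caseE0 a b x1 x2 t0 G H0 HK HE).
    + right; right; right. apply (caseEpos a b x1 x2 t0 G H0 HK HE).
Qed.

Theorem theorem4p1 :
  (forall (a b : Rbar) (x1 x2 : R -> R),
     geodesic a b x1 x2 -> nonconstant a b x1 x2 ->
     (exists al, reparam_of a b x1 x2 m_infty p_infty sig1_1 (sig1_2 al)) \/
     (exists al e, (e = 1 \/ e = -1) /\
        reparam_of a b x1 x2 0 p_infty sig2_1 (sig2_2 e al)) \/
     (exists c be e, 0 < c /\ (e = 1 \/ e = -1) /\
        reparam_of a b x1 x2 0 p_infty (sig3_1 c) (sig3_2 c e be)) \/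
     (exists c be e, 0 < c /\ (e = 1 \/ e = -1) /\
        reparam_of a b x1 x2 0 PI (sig4_1 c) (sig4_2 c e be))) /\
  (forall al,
     geodesic m_infty p_infty sig1_1 (sig1_2 al) /\
     complete_left m_infty p_infty sig1_1 (sig1_2 al) /\
     complete_right m_infty p_infty sig1_1 (sig1_2 al)) /\
  (forall al e, (e = 1 \/ e = -1) ->
     geodesic 0 p_infty sig2_1 (sig2_2 e al) /\
     ~ complete_left 0 p_infty sig2_1 (sig2_2 e al) /\
     complete_right 0 p_infty sig2_1 (sig2_2 e al)) /\
  (forall c be e, 0 < c -> (e = 1 \/ e = -1) ->
     geodesic 0 p_infty (sig3_1 c) (sig3_2 c e be) /\
     filterlim (sig3_1 c) (Rbar_locally p_infty) (locally 0) /\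
     filterlim (sig3_1 c) (at_right 0) (Rbar_locally p_infty) /\
     ~ complete_left 0 p_infty (sig3_1 c) (sig3_2 c e be) /\
     complete_right 0 p_infty (sig3_1 c) (sig3_2 c e be) /\
     total_length 0 p_infty (sig3_1 c) (sig3_2 c e be) m_infty) /\
  (forall c be e, 0 < c -> (e = 1 \/ e = -1) ->
     geodesic 0 PI (sig4_1 c) (sig4_2 c e be) /\
     filterlim (sig4_1 c) (at_right 0) (Rbar_locally p_infty) /\
     filterlim (sig4_2 c e be) (at_right 0)
       (Rbar_locally (if Rlt_dec 0 e then p_infty else m_infty)) /\
     filterlim (sig4_1 c) (at_left PI) (Rbar_locally p_infty) /\
     filterlim (sig4_2 c e be) (at_left PI)
       (Rbar_locally (if Rlt_dec 0 e then m_infty else p_infty)) /\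
     ~ complete_left 0 PI (sig4_1 c) (sig4_2 c e be) /\
     ~ complete_right 0 PI (sig4_1 c) (sig4_2 c e be) /\
     total_length 0 PI (sig4_1 c) (sig4_2 c e be) (Finite PI)) /\
  (forall c be e, 0 < c -> (e = 1 \/ e = -1) -> exists beta,
     forall t, 0 < t ->
       (sig3_1 c t) ^ 2 - (-1) / c ^ 2 = (sig3_2 c e be t + beta) ^ 2) /\
  (forall c be e, 0 < c -> (e = 1 \/ e = -1) -> exists beta,
     forall t, 0 < t < PI ->
       (sig4_1 c t) ^ 2 - 1 / c ^ 2 = (sig4_2 c e be t + beta) ^ 2) /\
  (forall al e, (e = 1 \/ e = -1) -> exists beta,
     forall t, 0 < t ->
       (sig2_1 t) ^ 2 - 0 = (sig2_2 e al t + beta) ^ 2).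
Proof.
  assert (PIp := PI_RGT_0).
  split; [exact classify|].
  split; [|split; [|split; [|split; [|split; [|split]]]]].
  - intros al. split; [apply geo1|]. split; exists sig1_1, (sig1_2 al); split; auto; apply geo1.
  - intros al e He. split; [apply geo2; auto|]. split.
    + apply not_cl_left; [apply at_right_forall; intros; simpl; auto| exact filterlim_Rinv_0_right].
    + exists sig2_1, (sig2_2 e al). split; auto. apply geo2; auto.
  - intros c be e Hc He. split; [apply geo3; auto|]. split; [apply lim3b; auto|].
    split; [apply lim3a; auto|]. split.
    + apply not_cl_left; [apply at_right_forall; intros; simpl; auto| apply lim3a; auto].
    + split; [exists (sig3_1 c), (sig3_2 c e be); split; auto; apply geo3; auto|]. apply len3; auto.
  - intros c be e Hc He. split; [apply geo4; auto|].
    split; [apply lim_invsin0; auto|]. split; [apply lim4_2_0; auto|].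
    split; [apply lim_invsinPI; auto|]. split; [apply lim4_2_PI; auto|].
    split; [|split; [apply not_cl_right, lim_invsinPI; auto| apply len4; auto]].
    apply not_cl_left; [|apply lim_invsin0; auto].
    unfold at_right, within. exists (mkposreal PI PI_RGT_0). intros t Ht Hp.
    unfold ball in Ht; simpl in Ht.
    unfold AbsRing_ball, abs, minus, plus, opp in Ht; simpl in Ht.
    apply Rabs_lt_between in Ht. simpl. lra.
  - intros c be e Hc He. exists (- be). intros t Ht. unfold sig3_1, sig3_2.
    assert (Hs := sinh_pos t Ht). assert (Hcs := cosh_sinh t).
    replace (e * (cosh t / sinh t) / c + be + - be) with (e * (cosh t / sinh t) / c) by ring.
    transitivity ((1 + sinh t ^ 2) / (c ^ 2 * sinh t ^ 2)); [field; lra|].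
    transitivity (e ^ 2 * cosh t ^ 2 / (c ^ 2 * sinh t ^ 2)); [|field; lra].
    replace (e ^ 2) with 1 by (destruct He; subst; ring). f_equal. lra.
  - intros c be e Hc He. exists (- be). intros t Ht. unfold sig4_1, sig4_2.
    assert (Hs : 0 < sin t) by (apply sin_gt_0; lra). assert (Hcs := sin_cos_sq t).
    replace (e * (cos t / sin t) / c + be + - be) with (e * (cos t / sin t) / c) by ring.
    transitivity ((1 - sin t ^ 2) / (c ^ 2 * sin t ^ 2)); [field; lra|].
    transitivity (e ^ 2 * cos t ^ 2 / (c ^ 2 * sin t ^ 2)); [|field; lra].
    replace (e ^ 2) with 1 by (destruct He; subst; ring). f_equal. lra.
  - intros al e He. exists (- al). intros t Ht. unfold sig2_1, sig2_2.
    replace (e * / t + al + - al) with (e * / t) by ring.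
    destruct He; subst; field; lra.
Qed.
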